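(* Let $n\ge k\ge1$ and let $\mathbf{M}=(m_{i,j})$ be a $k\times n$ binary matrix satisfying the MDS Condition, all of whose rows have Hamming weight exactly $n-k+1$, and such that the zero sets $Z_i=\{j\in[n]: m_{i,j}=0\}$ satisfy $|Z_i\cap Z_{i'}|\le1$ for all $i\ne i'$. Then for every prime power $q\ge n+k-1$ there exists an $[n,k]_q$ MDS code having a generator matrix that fits $\mathbf{M}$.
   Context: $[n]=\{1,\ldots,n\}$. $\mathbf{M}$ satisfies the MDS Condition if $|\bigcup_{i\in I}{\sf supp}(\mathbf{M}_i)|\ge n-k+|I|$ for all nonempty $I\subseteq[k]$, where ${\sf supp}(\mathbf{M}_i)=\{j: m_{i,j}\ne0\}$. A matrix $\mathbf{G}=(g_{i,j})\in\mathbb{F}_q^{k\times n}$ fits $\mathbf{M}$ if $g_{i,j}=0$ whenever $m_{i,j}=0$. An $[n,k]_q$ MDS code is a $k$-dimensional linear code in $\mathbb{F}_q^n$ with minimum Hamming distance $n-k+1$. *)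

(* Defs.v *)
From HB Require Import structures.
From mathcomp Require Import all_boot all_order all_algebra all_field.
Set Implicit Arguments. Unset Strict Implicit. Unset Printing Implicit Defensive.
Import GRing.Theory.
Local Open Scope ring_scope.

(* Binary matrices are represented as 'M[bool]_(k,n); entry true = 1. *)

Definition bsupp (k n : nat) (M : 'M[bool]_(k, n)) (i : 'I_k) : {set 'I_n} :=
  [set j | M i j].

Definition bzeros (k n : nat) (M : 'M[bool]_(k, n)) (i : 'I_k) : {set 'I_n} :=
  [set j | ~~ M i j].

Definition MDS_condition (k n : nat) (M : 'M[bool]_(k, n)) : Prop :=
  forall I : {set 'I_k}, I != set0 ->
    (n - k + #|I| <= #|\bigcup_(i in I) bsupp M i|)%N.

Definition fits (F : fieldType) (k n : nat) (G : 'M[F]_(k, n))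
  (M : 'M[bool]_(k, n)) : Prop :=
  forall i j, ~~ M i j -> G i j = 0.

Definition hwt (F : fieldType) (n : nat) (v : 'rV[F]_n) : nat :=
  #|[set j | v 0 j != 0]|.

(* A linear code in F^n: a subspace, represented by a matrix whose row space
   is the code (mxalgebra row-space convention). *)
Definition min_dist_is (F : fieldType) (m n : nat) (C : 'M[F]_(m, n)) (d : nat)
  : Prop :=
  (forall c : 'rV[F]_n, (c <= C)%MS -> c != 0 -> (d <= hwt c)%N) /\
  (exists2 c : 'rV[F]_n, (c <= C)%MS & (c != 0) && (hwt c == d)).

(* [n,k] MDS code with generator matrix G: G is k x n, its rows are linearly
   independent (so its row space is k-dimensional and G is a generator matrix
   of it), and the minimum distance of the row space is n - k + 1. *)
Definition is_MDS_generator (F : fieldType) (k n : nat) (G : 'M[F]_(k, n))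
  : Prop :=
  row_free G /\ min_dist_is G (n - k + 1).

(* Main.v *)
Require Import Defs.
From HB Require Import structures.
From mathcomp Require Import all_boot all_order all_algebra all_field.
From mathcomp Require Import zify fingroup perm.

Set Implicit Arguments. Unset Strict Implicit. Unset Printing Implicit Defensive.

Lemma sdr (T P : finType) (p00 : P) (bad : T -> P -> bool) (N : {set T}) (R : {set P}) :
  (forall t, t \in N -> forall p q, p \in R -> q \in R -> bad t p -> bad t q -> p = q) ->
  #|N| <= #|R| ->
  (#|N| < #|R| \/ (forall p, p \in R -> exists2 t, t \in N & ~~ bad t p)) ->
  exists g : T -> P, {in N &, injective g} /\
     (forall t, t \in N -> g t \in R /\ ~~ bad t (g t)).
Proof.
have [m leNm] := ubnP #|N|; elim: m N R leNm => // m IH N R leNm Huniq HNR Hc.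
have [->|[t0 t0N]] := set_0Vmem N.
  by exists (fun _ => p00); split=> [x|t]; rewrite inE.
set N' := N :\ t0.
have N0 : 0 < #|N| by apply/card_gt0P; exists t0.
have cN' : #|N'| = #|N|.-1 by rewrite /N' (cardsD1 t0 N) t0N.
have N'N : {subset N' <= N} by move=> t; rewrite inE => /andP[].
have cR' : forall p, p \in R -> #|R :\ p| = #|R|.-1.
  by move=> p pR; rewrite (cardsD1 p R) pR.
have [p0 [p0R nb0 HR']] : exists p0, [/\ p0 \in R, ~~ bad t0 p0 &
   (#|N'| < #|R :\ p0| \/ (forall p, p \in R :\ p0 -> exists2 t, t \in N' & ~~ bad t p))].
  have exnb : (1 < #|R|)%N -> exists2 p, p \in R & ~~ bad t0 p.
    move=> /card_gt1P [x [y [xR yR xy]]].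
    case: (boolP (bad t0 x)) => bx; last by exists x.
    case: (boolP (bad t0 y)) => byy; last by exists y.
    by move: xy; rewrite (Huniq t0 t0N x y) ?eqxx.
  have [ltNR|eqNR] := ltnP #|N| #|R|.
    have [p pR nb] := exnb (leq_ltn_trans N0 ltNR).
    exists p; split=> //; left.
    by rewrite cN' (cR' p pR) -ltnS (ltn_predK N0) (ltn_predK ltNR).
  have eNR : #|N| = #|R| by apply/eqP; rewrite eqn_leq HNR eqNR.
  have Hc2 : forall p, p \in R -> exists2 t, t \in N & ~~ bad t p.
    by case: Hc => //; rewrite eNR ltnn.
  have [/existsP[ps /andP[psR /forallP allb]]|/existsPn none] :=
     boolP [exists p in R, [forall t in N', bad t p]].
  - exists ps; split=> //.
      have [t tN nbt] := Hc2 ps psR.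
      suff E : t = t0 by rewrite -E.
      apply/eqP; apply: contraNT nbt => tt0; have := allb t; rewrite /N' !inE tt0 tN /= => ->//.
    right=> p; rewrite !inE => /andP[pps pR].
    case: (boolP [forall t in N', bad t p]) => [/forallP allbp|].
      case: (set_0Vmem N') => [N'0|[t tN']].
        exfalso; have : #|R :\ ps| = 0.
          by rewrite (cR' ps psR) -eNR -cN' N'0 cards0.
        by move/eqP; rewrite cards_eq0 => /eqP RE; move: (in_set0 p); rewrite -RE !inE pps pR.
      have bt := allbp t; rewrite tN' /= in bt.
      have bs := allb t; rewrite tN' /= in bs.
      by move/negP: pps; case; apply/eqP; apply: (Huniq t (N'N t tN') p ps pR psR bt bs).
    by move/forallPn => [t]; rewrite negb_imply => /andP[tN' nb]; exists t.
  - have [p pR nb] : exists2 p, p \in R & ~~ bad t0 p.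
      case: (ltnP 1 #|R|) => [/exnb //|R1].
      exfalso; have N1 : #|N| = 1 by apply/eqP; rewrite eqn_leq N0 eNR R1.
      have N'0 : N' = set0 by apply/eqP; rewrite -cards_eq0 cN' N1.
      have [p pR] : exists p, p \in R by apply/card_gt0P; rewrite -eNR.
      by have := none p; rewrite pR /=; move/negP; apply; apply/forallP => t; rewrite N'0 inE.
    exists p; split=> //; right=> q; rewrite inE => /andP[_ qR].
    by have := none q; rewrite qR /= => /forallPn[t]; rewrite negb_imply => /andP[tN' nbt]; exists t.
have h1 : #|N'| < m by rewrite cN' -ltnS (ltn_predK N0).
have h2 : forall t, t \in N' -> forall p q, p \in R :\ p0 -> q \in R :\ p0 -> bad t p -> bad t q -> p = q.
  by move=> t tN' p q; rewrite !inE => /andP[_ pR] /andP[_ qR]; apply: Huniq => //; apply: N'N.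
have h3 : #|N'| <= #|R :\ p0| by rewrite cN' (cR' p0 p0R) -subn1 -[X in _ <= X]subn1 leq_sub2r.
have [g [ginj gP]] := IH N' (R :\ p0) h1 h2 h3 HR'.
have gN : forall t, t \in N -> t != t0 -> g t \in R :\ p0 /\ ~~ bad t (g t).
  by move=> t tN tt0; apply: gP; rewrite /N' !inE tt0 tN.
exists (fun t => if t == t0 then p0 else g t); split.
  move=> x y xN yN /=.
  case: (eqVneq x t0) => [->|xt0]; case: (eqVneq y t0) => [->//|yt0].
  + by move=> E; have [] := gN y yN yt0; rewrite -E !inE eqxx.
  + by move=> E; have [] := gN x xN xt0; rewrite E !inE eqxx.
  + by apply: ginj; rewrite /N' !inE ?xt0 ?yt0.
move=> t tN; case: (eqVneq t t0) => [->//|tt0].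
by have [] := gN t tN tt0; rewrite !inE => /andP[_ ->].
Qed.


Lemma card_ord_range k (A : {set 'I_k}) a b :
  (forall t : 'I_k, t \in A -> a <= t < a + b) -> #|A| <= b.
Proof.
move=> H; rewrite cardE -(size_map val) -(size_iota a b).
apply: uniq_leq_size; first by rewrite map_inj_uniq ?enum_uniq //; apply: val_inj.
by move=> x /mapP[t]; rewrite mem_enum => /H tA ->; rewrite mem_iota.
Qed.

Section Greedy.
Variables (P : finType) (p00 : P) (k : nat) (Z : nat -> {set P}).
Hypothesis hk : 0 < k.
Hypothesis hsz : forall s, s < k -> #|Z s| = k.-1.
Hypothesis hpair : forall s t, s < k -> t < k -> s != t -> #|Z s :&: Z t| <= 1.
Hypothesis C1 : 2 < k -> forall p, p \in Z 0 -> p \in Z 1 -> p \in Z 2 -> False.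
Hypothesis C2 : 1 < k -> (forall p, p \in Z 0 -> p \in Z 1 -> False) \/
                          (2 < k /\ exists q, (q \in Z 1) && (q \in Z k.-1)).

Lemma pair_eq s t p q : s < k -> t < k -> s != t ->
  p \in Z s -> p \in Z t -> q \in Z s -> q \in Z t -> p = q.
Proof.
move=> sk tk st ps pt qs qt.
by apply: (card_le1_eqP (hpair sk tk st)); rewrite inE ?ps ?pt ?qs ?qt.
Qed.

Lemma avoid p : exists t : 'I_k, p \notin Z t.
Proof.
case: (ltnP 2 k) => [k2|k2].
- case: (boolP (p \in Z 0)) => [p0|p0]; last by exists (Ordinal hk).
  have k1 : 1 < k by lia.
  case: (boolP (p \in Z 1)) => [p1|p1]; last by exists (Ordinal k1).
  by exists (Ordinal k2); apply/negP => p2; apply: (C1 k2 p0 p1 p2).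
- case: (ltnP 1 k) => [k1|k1].
  + case: (C2 k1) => [H|[k2' _]]; last by move: k2'; rewrite ltnNge k2.
    case: (boolP (p \in Z 0)) => [p0|p0]; last by exists (Ordinal hk).
    by exists (Ordinal k1); apply/negP => p1; apply: (H p p0 p1).
  + exists (Ordinal hk) => /=.
    have : #|Z 0| = 0 by rewrite hsz //; lia.
    by move/eqP; rewrite cards_eq0 => /eqP ->; rewrite inE.
Qed.

Definition onFrom (s : nat) (p : P) := [exists u : 'I_k, (s <= u) && (p \in Z u)].
Definition Fgood (c : P -> 'I_k) := 2 < k -> forall p, p \in Z 0 -> p \in Z 1 -> ~~ onFrom 2 p ->
  exists2 q, q \in Z 1 & (q \in Z k.-1) && (c q == 0 :> nat).
Definition Inv s (c : P -> 'I_k) :=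
 [/\ forall p (t : nat), t < k -> p \in Z t -> onFrom s p -> c p != t :> nat,
     forall u t, s <= u -> u < k -> t < u -> exists2 p, p \in Z u & c p == t :> nat
   & s < k -> Fgood c].

Lemma k1k : k.-1 < k. Proof. lia. Qed.

Lemma step s c : s < k -> Inv s.+1 c -> exists c', Inv s c'.
Proof.
move=> sk [Ia Ib If].
pose O := [set p | onFrom s.+1 p].
pose R := Z s :\: O.
pose N := [set t : 'I_k | (t < s) && ~~ [exists p in Z s, onFrom s.+1 p && (c p == t)]].
have RZ : {subset R <= Z s} by move=> p; rewrite inE => /andP[].
have RO : forall p, p \in R -> ~~ onFrom s.+1 p by move=> p; rewrite !inE => /andP[].
have cR : s <= #|R|.
  have : #|Z s :&: O| <= k - s.+1.
    pose f p := odflt (Ordinal hk) [pick u : 'I_k | (s.+1 <= u) && (p \in Z u)].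
    have fP : forall p, onFrom s.+1 p -> (s.+1 <= f p) && (p \in Z (f p)).
      move=> p; rewrite /f => /existsP[u Hu]; case: pickP => [v -> //|/(_ u)].
      by rewrite Hu.
    rewrite -(card_in_imset (f:=f)).
      apply: (card_ord_range (a := s.+1)) => u /imsetP[p]; rewrite !inE => /andP[_ pO] ->.
      case/andP: (fP p pO) => H _; rewrite H /= subnKC //; exact: ltn_ord.
    move=> p q; rewrite !inE => /andP[ps pO] /andP[qs qO] fpq.
    case/andP: (fP p pO) => H1 H2; case/andP: (fP q qO) => _ H3.
    apply: (pair_eq sk (ltn_ord (f p)) _ ps H2 qs); first by rewrite neq_ltn H1.
    by rewrite fpq.
  have := cardsID O (Z s); rewrite hsz // => H; rewrite /R; lia.
have Nlt : forall t, t \in N -> t < s by move=> t; rewrite inE => /andP[].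
have cNR : #|N| <= #|R|.
  by apply: leq_trans cR; apply: (card_ord_range (a:=0)) => t /Nlt.
have uniqbad : forall t : 'I_k, t \in N -> forall p q, p \in R -> q \in R ->
    p \in Z t -> q \in Z t -> p = q.
  move=> t tN p q pR qR pt qt.
  apply: (pair_eq sk (ltn_ord t) _ (RZ p pR) pt (RZ q qR) qt).
  by rewrite neq_ltn (Nlt t tN) orbT.
have Hcond : #|N| < #|R| \/ (forall p, p \in R -> exists2 t, t \in N & ~~ (p \in Z t)).
  case: (ltnP #|N| #|R|) => [|RN]; [by left | right].
  have NL : N \subset [set t : 'I_k | t < s] by apply/subsetP => t /Nlt; rewrite inE.
  have cardeq : #|N| = #|[set t : 'I_k | t < s]|.
    apply/eqP; rewrite eqn_leq (subset_leq_card NL) /=.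
    apply: leq_trans RN; apply: leq_trans cR.
    by apply: (card_ord_range (a:=0)) => t; rewrite inE.
  have eqNL : N =i [set t : 'I_k | t < s] by apply/(subset_cardP cardeq).
  have Nall : forall t : 'I_k, t < s -> t \in N by move=> t ts; rewrite eqNL inE.
  move=> p pR.
  case: (boolP [exists t in N, p \notin Z t]) => [/exists_inP[t tN pt]|/exists_inPn H].
    by exists t.
  exfalso.
  have pZ : forall t : 'I_k, t < s -> p \in Z t.
    by move=> t ts; move: (H t (Nall t ts)); rewrite negbK.
  have ps := RZ p pR.
  have o0 : 0 < k by [].
  case: (ltnP 1 s) => [s1|s1].
  - have o1 : 1 < k by lia.
    have k2 : 2 < k by lia.
    have p0 := pZ (Ordinal o0) (ltnW s1).
    have p1 := pZ (Ordinal o1) s1.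
    have p2 : p \in Z 2.
      case: (ltnP 2 s) => [s2|s2]; first exact: (pZ (Ordinal k2) s2).
      by have -> : 2 = s by lia.
    exact: (C1 k2 p0 p1 p2).
  - case: (posnP s) => [s0|s0].
      have : #|R| <= 0.
        by apply: leq_trans RN _; apply: (card_ord_range (a:=0)) => t /Nlt; rewrite s0.
      by rewrite leqn0 cards_eq0 => /eqP RE; move: pR; rewrite RE inE.
    have s1' : s = 1 by lia.
    have k1 : 1 < k by lia.
    have p0 := pZ (Ordinal o0) s0.
    have p1 : p \in Z 1 by rewrite -s1'.
    case: (C2 k1) => [HH|[k2 _]]; first exact: (HH p p0 p1).
    have pno : ~~ onFrom 2 p by rewrite -s1'; exact: RO.
    have [q q1 /andP[qk q0]] := If ltac:(lia) k2 p p0 p1 pno.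
    have := Nall (Ordinal o0) s0; rewrite inE /= s0 /= => /negP; apply.
    apply/exists_inP; exists q; first by rewrite s1'.
    apply/andP; split; last by apply/eqP/val_inj => /=; apply/eqP.
    by apply/existsP; exists (Ordinal k1k); rewrite qk andbT /= s1'; lia.
have topN : s = k.-1 -> forall t : 'I_k, t < s -> t \in N.
  move=> sk1 t ts; rewrite inE ts /=; apply/exists_inP => -[p _ /andP[/existsP[u /andP[ku _]] _]].
  by move: (ltn_ord u); lia.
have [g [ginj gP gforce]] : exists g : 'I_k -> P, [/\ {in N &, injective g},
     (forall t, t \in N -> g t \in R /\ g t \notin Z t)
   & (s = k.-1 -> 2 < k -> (exists q, [&& q \in Z 1, q \in Z k.-1 & q \notin Z 0]) ->
       exists2 q, [&& q \in Z 1, q \in Z k.-1 & q \notin Z 0] &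
         exists2 t, t \in N & (t == 0 :> nat) && (g t == q))].
  case: (boolP [&& s == k.-1, 2 < k & [exists q, [&& q \in Z 1, q \in Z k.-1 & q \notin Z 0]]]).
  - case/and3P => /eqP sk1 k2 /existsP[q qP].
    have k1 : 1 < k by lia.
    pose t0 : 'I_k := Ordinal hk.
    pose t1 : 'I_k := Ordinal k1.
    have t0N : t0 \in N by apply: topN => //=; lia.
    have t1N : t1 \in N by apply: topN => //=; lia.
    have qP' := qP; case/and3P: qP' => q1 qk q0.
    have qR : q \in R.
      rewrite !inE; apply/andP; split; last by rewrite sk1.
      by apply/existsP => -[u /andP[ku _]]; move: (ltn_ord u); lia.
    have h1 : forall t, t \in N :\ t0 -> forall p q0, p \in R :\ q -> q0 \in R :\ q ->
        p \in Z t -> q0 \in Z t -> p = q0.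
      move=> t; rewrite in_setD1 => /andP[_ tN] p q' /setD1P[_ pR] /setD1P[_ q'R].
      exact: uniqbad.
    have h2 : #|N :\ t0| <= #|R :\ q|.
      by move: cNR; rewrite (cardsD1 t0 N) (cardsD1 q R) t0N qR.
    have h3 : #|N :\ t0| < #|R :\ q| \/
        (forall p, p \in R :\ q -> exists2 t, t \in N :\ t0 & ~~ (p \in Z t)).
      right=> p /setD1P[pq pR]; exists t1; first by rewrite in_setD1 t1N andbT.
      apply/negP => p1; move/negP: pq; apply; apply/eqP.
      apply: (pair_eq k1 k1k _ p1 _ q1 qk); first by rewrite neq_ltn; apply/orP; left; lia.
      by rewrite -sk1; exact: RZ.
    have [g' [g'inj g'P]] := @sdr _ _ p00 (fun (t : 'I_k) (p : P) => p \in Z t) _ _ h1 h2 h3.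
    have g'N : forall t, t \in N -> t != t0 -> g' t \in R :\ q /\ g' t \notin Z t.
      by move=> t tN tt0; apply: g'P; rewrite in_setD1 tt0 tN.
    exists (fun t => if t == t0 then q else g' t); split.
    + move=> x y xN yN /=.
      case: (eqVneq x t0) => [->|xt0]; case: (eqVneq y t0) => [->//|yt0].
      * by move=> E; have [] := g'N y yN yt0; rewrite -E !inE eqxx.
      * by move=> E; have [] := g'N x xN xt0; rewrite E !inE eqxx.
      * by apply: g'inj; rewrite in_setD1 ?xt0 ?yt0 ?xN ?yN.
    + move=> t tN; case: (eqVneq t t0) => [->|tt0]; first by split.
      by have [] := g'N t tN tt0; rewrite !inE => /andP[_ ->] ->.
    + move=> _ _ _; exists q => //; exists t0 => //=; by rewrite eqxx.
  - move=> Hno.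
    have h1 : forall t, t \in N -> forall p q, p \in R -> q \in R ->
        p \in Z t -> q \in Z t -> p = q by exact: uniqbad.
    have [g [ginj gP]] := @sdr _ _ p00 (fun (t : 'I_k) (p : P) => p \in Z t) _ _ h1 cNR Hcond.
    exists g; split => //.
    move=> sk1 k2 [q qP]; move: Hno; rewrite sk1 eqxx k2 /=.
    by move/negP; case; apply/existsP; exists q.
pose dflt p := odflt (Ordinal hk) [pick t : 'I_k | p \notin Z t].
have dfltP : forall p, p \notin Z (dflt p).
  move=> p; rewrite /dflt; case: pickP => [t //|H].
  by have [t pt] := avoid p; move: (H t); rewrite pt.
pose c' p := if p \in R then (if [pick t in N | g t == p] is Some t then t else dflt p) else c p.
have c'g : forall t, t \in N -> c' (g t) = t.
  move=> t tN; rewrite /c'; have [gR _] := gP t tN; rewrite gR.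
  case: pickP => [t' /andP[t'N /eqP e]|H]; first exact: ginj.
  by move: (H t); rewrite tN eqxx.
have c'out : forall p, p \notin R -> c' p = c p by move=> p pR; rewrite /c' (negbTE pR).
have c'R : forall p (t : nat), p \in R -> p \in Z t -> c' p != t :> nat.
  move=> p t pR pt; rewrite /c' pR; case: pickP => [t' /andP[t'N /eqP e]|_].
    by apply/eqP => et; have [_] := gP t' t'N; rewrite e et pt.
  by apply/eqP => et; move: (dfltP p); rewrite et pt.
have notR : forall p u, u < k -> s < u -> p \in Z u -> p \notin R.
  move=> p u uk su pu; rewrite !inE negb_and negbK; apply/orP; left.
  by apply/existsP; exists (Ordinal uk); rewrite /= su pu.
exists c'; split.
- move=> p t tk pt onF.
  case: (boolP (p \in R)) => pR; first exact: c'R.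
  rewrite c'out //; apply: Ia => //.
  move/existsP: onF => [u /andP[su pu]].
  case: (ltnP s u) => [su'|us].
    by apply/existsP; exists u; rewrite su' pu.
  have pZs : p \in Z s by have -> : s = u by lia.
  by move: pR; rewrite !inE pZs andbT negbK.
- move=> u t su uk tu.
  case: (ltnP s u) => [su'|us].
    have [p pu cp] := Ib u t su' uk tu.
    by exists p => //; rewrite c'out //; apply: (notR p u).
  have eu : u = s by lia.
  rewrite eu; have tk : t < k by lia.
  have ts : t < s by lia.
  case: (boolP ((Ordinal tk) \in N)) => tN.
    exists (g (Ordinal tk)); first by have [gR _] := gP _ tN; exact: RZ.
    by rewrite c'g.
  move: tN; rewrite inE /= ts /= negbK => /exists_inP[p ps /andP[pO /eqP cp]].
  exists p => //; rewrite c'out ?cp //.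
  by rewrite !inE pO.
- move=> _ k2 p p0 p1 pno.
  case: (ltnP s.+1 k) => [s1k|ks].
    have [q q1 /andP[qk q0]] := If s1k k2 p p0 p1 pno.
    exists q => //; rewrite qk /= c'out //.
    by apply: (notR q k.-1 k1k) => //; lia.
  have sk1 : s = k.-1 by lia.
  have k1 : 1 < k by lia.
  case: (C2 k1) => [HH|[_ [q0 /andP[q01 q0k]]]]; first by case: (HH p p0 p1).
  case: (boolP (q0 \in Z 0)) => q00.
    exfalso.
    have epq : p = q0 by apply: (pair_eq hk k1 (isT : 0 != 1) p0 p1 q00 q01).
    move: pno; rewrite epq => /negP; apply; apply/existsP; exists (Ordinal k1k).
    by rewrite q0k andbT /=; lia.
  have [q qP [t tN /andP[t0 /eqP gt]]] := gforce sk1 k2 (ex_intro _ q0 (introT and3P (And3 q01 q0k q00))).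
  case/and3P: qP => q1 qk _.
  by exists q => //; rewrite qk /= -gt c'g.
Qed.

Lemma greedy : exists c : P -> 'I_k,
   (forall p (t : nat), t < k -> p \in Z t -> c p != t :> nat) /\
   (forall s t, t < s -> s < k -> exists2 p, p \in Z s & c p == t :> nat).
Proof.
suff : forall j, j <= k -> exists c, Inv (k - j) c.
  case/(_ k (leqnn k)) => c; rewrite subnn => -[Ia Ib _]; exists c; split.
  - move=> p t tk pt; apply: Ia => //; apply/existsP; exists (Ordinal tk); by rewrite pt.
  - by move=> s t ts sk; apply: Ib.
elim=> [_|j IH jk].
  exists (fun _ => Ordinal hk); rewrite subn0; split.
  - by move=> p t tk pt /existsP[u /andP[ku _]]; move: (ltn_ord u); rewrite ltnNge ku.
  - by move=> u t ku uk; move: uk; rewrite ltnNge ku.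
  - by rewrite ltnn.
have [c Hc] := IH (ltnW jk).
have e : k - j = (k - j.+1).+1 by lia.
rewrite e in Hc; apply: step Hc; lia.
Qed.
End Greedy.


Lemma perm3 (T : finType) (a b c i j l : T) :
  a != b -> a != c -> b != c -> i != j -> i != l -> j != l ->
  exists s : {perm T}, [/\ s i = a, s j = b & s l = c].
Proof.
move=> ab ac bc ij il jl.
pose s1 := tperm i a.
pose s2 := tperm (s1 j) b.
have s1ja : s1 j != a by rewrite -[a](tpermL i a) (inj_eq perm_inj) eq_sym.
have s12i : (s1 * s2)%g i = a by rewrite permM tpermL tpermD // eq_sym.
have s12j : (s1 * s2)%g j = b by rewrite permM tpermL.
pose s3 := tperm ((s1 * s2)%g l) c.
have la : (s1 * s2)%g l != a by rewrite -s12i (inj_eq perm_inj) eq_sym.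
have lb : (s1 * s2)%g l != b by rewrite -s12j (inj_eq perm_inj) eq_sym.
exists (s1 * s2 * s3)%g; split.
- by rewrite permM s12i tpermD // eq_sym.
- by rewrite permM s12j tpermD // eq_sym.
- by rewrite permM tpermL.
Qed.

Section Select.
Variables (P : finType) (k : nat) (Z : 'I_k -> {set P}).
Hypothesis k1 : 0 < k.
Hypothesis hpair : forall i j, i != j -> #|Z i :&: Z j| <= 1.
Hypothesis hcov : forall p, exists i, p \notin Z i.

Definition ordS (s : nat) : 'I_k := insubd (Ordinal k1) s.
Lemma ordSK (s : nat) : s < k -> val (ordS s) = s.
Proof. by move=> sk; rewrite /ordS val_insubd sk. Qed.
Lemma ordS_inj s t : s < k -> t < k -> ordS s = ordS t -> s = t.
Proof. by move=> sk tk e; rewrite -(ordSK sk) -(ordSK tk) e. Qed.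

Lemma pair_eq' i j p q : i != j -> p \in Z i -> p \in Z j -> q \in Z i -> q \in Z j -> p = q.
Proof.
move=> ij pi pj qi qj.
by apply: (card_le1_eqP (hpair ij)); rewrite inE ?pi ?pj ?qi ?qj.
Qed.

Lemma select : exists s : {perm 'I_k},
  let Zn := fun t => Z (s (ordS t)) in
  (2 < k -> forall p, p \in Zn 0 -> p \in Zn 1 -> p \in Zn 2 -> False) /\
  (1 < k -> (forall p, p \in Zn 0 -> p \in Zn 1 -> False) \/
            (2 < k /\ exists q, (q \in Zn 1) && (q \in Zn k.-1))).
Proof.
case: (ltnP 2 k) => [k3|k2].
- have o0 : 0 < k by lia.
  have o1 : 1 < k by lia.
  have o01 : ordS 0 != ordS 1 by apply/eqP => e; move: (ordS_inj o0 o1 e).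
  have o02 : ordS 0 != ordS 2 by apply/eqP => e; move: (ordS_inj o0 k3 e).
  have o12 : ordS 1 != ordS 2 by apply/eqP => e; move: (ordS_inj o1 k3 e).
  case: (boolP [exists a, exists b, (a != b) && [disjoint Z a & Z b]]).
  + move=> /existsP[a /existsP[b /andP[ab dab]]].
    have [c [ca cb]] : exists c, c != a /\ c != b.
      case: (eqVneq (ordS 0) a) => [e0|n0]; last first.
        case: (eqVneq (ordS 0) b) => [e0'|n0']; last by exists (ordS 0).
        case: (eqVneq (ordS 1) a) => [e1|n1]; last by exists (ordS 1); split => //; rewrite -e0' eq_sym.
        by exists (ordS 2); split; [rewrite -e1 eq_sym | rewrite -e0' eq_sym].
      case: (eqVneq (ordS 1) b) => [e1|n1]; last by exists (ordS 1); split => //; rewrite -e0 eq_sym.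
      by exists (ordS 2); split; [rewrite -e0 eq_sym | rewrite -e1 eq_sym].
    have [s [s0 s1 s2]] := perm3 ab (ltac:(by rewrite eq_sym) : a != c) (ltac:(by rewrite eq_sym) : b != c) o01 o02 o12.
    have I0 : Z a :&: Z b = set0 by apply: disjoint_setI0.
    have nab : forall p, p \in Z a -> p \in Z b -> False.
      by move=> p pa pb; move: (in_set0 p); rewrite -I0 inE pa pb.
    exists s => /=; split; first by move=> _ p; rewrite s0 s1 => pa pb _; apply: (nab p).
    by move=> _; left => p; rewrite s0 s1; apply: nab.
  + move/existsPn => H.
    have nd : forall x y, x != y -> exists p, (p \in Z x) && (p \in Z y).
      move=> x y xy; move/existsPn: (H x) => /(_ y); rewrite xy /= -setI_eq0 => /set0Pn[p].
      by rewrite inE => pxy; exists p.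
    have [p0 /andP[p0a p0b]] := nd _ _ o01.
    have [c pc] := hcov p0.
    have ca : ordS 0 != c by apply: contraNneq pc => <-.
    have cb : ordS 1 != c by apply: contraNneq pc => <-.
    have [s [s0 s1 s2]] := perm3 o01 ca cb o01 o02 o12.
    exists s => /=; split.
      move=> _ p; rewrite s0 s1 s2 => pa pb pcc.
      have e : p = p0 by apply: (pair_eq' o01 pa pb p0a p0b).
      by move: pc; rewrite -e pcc.
    move=> _; right; split => //.
    have kk : k.-1 < k by lia.
    have ne : s (ordS 1) != s (ordS k.-1).
      rewrite (inj_eq perm_inj); apply/eqP => e; move: (ordS_inj o1 kk e); lia.
    have [q qq] := nd _ _ ne; by exists q.
- have k2'' : ~~ (2 < k) by rewrite -leqNgt.
  exists 1%g; rewrite /=; split; first by move=> h; move/negP: k2''.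
  move=> k2'; left => p; rewrite !perm1 => p0 p1.
  have [i pi] := hcov p.
  have ik : nat_of_ord i < 2 by have := ltn_ord i; lia.
  have ei : i = ordS (nat_of_ord i) by apply: val_inj; rewrite /= ordSK.
  move: pi; rewrite ei.
  by case: (nat_of_ord i) ik => [|[|]] //= _; rewrite ?p0 ?p1.
Qed.
End Select.

Import GRing.Theory.
Local Open Scope ring_scope.

Section Alg.
Variables (F : finFieldType) (n k : nat) (Z : 'I_k -> {set 'I_n}) (beta : 'I_k -> F).

Definition fpol (al : 'I_n -> F) (i : 'I_k) : {poly F} :=
  \prod_(l in Z i) ('X - (al l)%:P).

Lemma fpolE al i x : (fpol al i).[x] = \prod_(l in Z i) (x - al l).
Proof. by rewrite /fpol horner_prod; apply: eq_bigr => l _; rewrite hornerXsubC. Qed.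

Definition Emx (al : 'I_n -> F) : 'M[F]_k := \matrix_(i, t) (fpol al i).[beta t].

Lemma Emx_eq al al' : al =1 al' -> Emx al = Emx al'.
Proof.
move=> H; apply/matrixP => i t; rewrite !mxE !fpolE.
by apply: eq_bigr => l _; rewrite H.
Qed.

Definition upd (al : 'I_n -> F) (j : 'I_n) (x : F) : 'I_n -> F :=
  fun l => if l == j then x else al l.

Hypothesis hZ : forall j, exists i, j \notin Z i.

Lemma improve al j : \det (Emx al) != 0 ->
  (#|[set x | \det (Emx (upd al j x)) == 0%R]| <= k.-1)%N.
Proof.
move=> Hdet.
pose Mp : 'M[{poly F}]_k := \matrix_(i, t)
   if j \in Z i then ((beta t)%:P - 'X) * (\prod_(l in Z i :\ j) (beta t - al l))%:P
   else ((fpol al i).[beta t])%:P.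
pose Q := \det Mp.
have evQ : forall x, Q.[x] = \det (Emx (upd al j x)).
  move=> x; rewrite -horner_evalE /Q -det_map_mx; congr (\det _).
  apply/matrixP => i t; rewrite mxE [Mp i t]mxE.
  rewrite [LHS](_ : _ = (if j \in Z i then ((beta t)%:P - 'X) * (\prod_(l in Z i :\ j) (beta t - al l))%:P
   else ((fpol al i).[beta t])%:P).[x]) //.
  rewrite mxE fpolE.
  case: ifP => jZ.
    rewrite hornerM !hornerE fpolE (bigD1 j jZ) /upd eqxx; congr (_ * _).
    rewrite [RHS](eq_bigl (fun l => l \in Z i :\ j)); last by move=> l; rewrite in_setD1 andbC.
    by apply: eq_bigr => l; rewrite in_setD1 => /andP[lj _]; rewrite (negbTE lj).
  rewrite hornerC fpolE; apply: eq_bigr => l lZ; rewrite /upd.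
  by case: eqP => // lj; move: jZ; rewrite -lj lZ.
have Q0 : Q != 0.
  apply: contraNneq Hdet => HQ.
  have E : Emx (upd al j (al j)) = Emx al.
    by apply: Emx_eq => l; rewrite /upd; case: eqP => // ->.
  by rewrite -E -evQ HQ horner0.
have [i0 ji0] := hZ j.
have Hc : (#|[set i | j \in Z i]| <= k.-1)%N.
  have H1 : [set i | j \in Z i] \subset [set: 'I_k] :\ i0.
    by apply/subsetP => i; rewrite !inE andbT; apply: contraTneq => ->.
  have := subset_leq_card H1; have := cardsD1 i0 [set: 'I_k].
  by rewrite cardsT card_ord inE /= => e H; apply: (leq_trans H); rewrite [in X in (_ <= X)%N]e add1n.
have sQ : (size Q <= k)%N.
  rewrite /Q /determinant.
  apply: leq_trans (size_sum _ _ _) _.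
  apply/bigmax_leqP_seq => s _ _.
  have -> : size ((-1) ^+ odd_perm s * \prod_i Mp i (s i)) = size (\prod_i Mp i (s i)).
    by case: (odd_perm s); rewrite ?expr1 ?expr0 ?mulN1r ?mul1r ?size_polyN.
  case: (boolP [forall i, Mp i (s i) != 0]) => [/forallP nz|/forallPn[i /negPn /eqP z]];
    last by rewrite (bigD1 i) //= z mul0r size_poly0.
  rewrite size_prod; last by move=> i _; apply: nz.
  have Hs : (\sum_i size (Mp i (s i)) <= \sum_(i < k) (1 + (j \in Z i)))%N.
    apply: leq_sum => i _; rewrite mxE; case: ifP => _.
      apply: leq_trans (size_polyMleq _ _) _.
      rewrite -opprB size_polyN size_XsubC.
      by have := size_polyC_leq1 (\prod_(l in Z i :\ j) (beta (s i) - al l)); case: size => [|[]].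
    exact: size_polyC_leq1.
  move: Hs; rewrite big_split /= sum1_card card_ord.
  have -> : (\sum_(i < k) (j \in Z i) = #|[set i | j \in Z i]|)%N.
    rewrite -sum1_card [RHS]big_mkcond /=; apply: eq_bigr => i _; rewrite inE; by case: (j \in Z i).
  have k0 : (0 < k)%N by apply: leq_ltn_trans (ltn_ord i0); rewrite leq0n.
  move=> H; rewrite leq_subLR; apply: (leq_ltn_trans H); lia.
have : (#|[set x | \det (Emx (upd al j x)) == 0%R]| < size Q)%N.
  rewrite cardE; apply: max_poly_roots => //; last exact: enum_uniq.
  by apply/allP => x; rewrite mem_enum inE /root evQ.
move=> H; have := leq_trans H sQ; lia.
Qed.

Lemma iter_distinct al0 : \det (Emx al0) != 0 -> (n + k - 1 <= #|F|)%N -> (0 < k)%N ->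
  exists al : 'I_n -> F, injective al /\ \det (Emx al) != 0.
Proof.
move=> d0 hF k0.
suff H : forall m, (m <= n)%N -> exists al, \det (Emx al) != 0 /\
    (forall l1 l2 : 'I_n, l1 != l2 -> (l1 < m)%N -> al l1 != al l2).
  have [al [d H']] := H n (leqnn n); exists al; split => // l1 l2 e.
  by apply/eqP; apply: contraT => ne; have := H' l1 l2 ne (ltn_ord l1); rewrite e eqxx.
elim=> [_|m IH mn]; first by exists al0; split.
have [al [d Hal]] := IH (ltnW mn).
pose j : 'I_n := Ordinal mn.
pose B := [set x | \det (Emx (upd al j x)) == 0] :|: [set al l | l in [set: 'I_n] :\ j].
have cB : (#|B| < #|F|)%N.
  apply: leq_ltn_trans (leq_card_setU _ _) _.
  have h1 := @improve al j d.
  have h2 : (#|[set al l | l in [set: 'I_n] :\ j]| <= n.-1)%N.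
    apply: leq_trans (leq_imset_card _ _) _.
    by have := cardsD1 j [set: 'I_n]; rewrite cardsT card_ord inE /= => e; rewrite [in X in (_ <= X)%N]e add1n.
  have n0 : (0 < n)%N := leq_ltn_trans (leq0n m) mn.
  lia.
have [x xB] : exists x, x \notin B.
  case: (boolP [exists x, x \notin B]) => [/existsP//|/existsPn H]; exfalso.
  have : [set: F] \subset B by apply/subsetP => x _; move: (H x); rewrite negbK.
  by move/subset_leq_card; rewrite cardsT => h; move: (leq_trans cB h); rewrite ltnn.
exists (upd al j x); split.
  by move: xB; rewrite !inE negb_or => /andP[].
move=> l1 l2 ne l1m; rewrite /upd.
case: (eqVneq l1 j) => [e1|n1]; case: (eqVneq l2 j) => [e2|n2].
- by move: ne; rewrite e1 e2 eqxx.
- apply: contraNneq xB => ->; rewrite inE; apply/orP; right; apply/imsetP; exists l2 => //.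
  by rewrite !inE n2.
- apply: contraNneq xB => <-; rewrite inE; apply/orP; right; apply/imsetP; exists l1 => //.
  by rewrite !inE n1.
- apply: Hal => //.
  have : (nat_of_ord l1 != m) by move: n1; apply: contra => /eqP e; apply/eqP/val_inj.
  lia.
Qed.

Section Code.
Variables (al : 'I_n -> F).
Hypothesis alinj : injective al.
Hypothesis dE : \det (Emx al) != 0.
Hypothesis hsz : forall i, #|Z i| = k.-1.
Hypothesis k0 : (0 < k)%N.
Hypothesis kn : (k <= n)%N.

Lemma size_fpol i : size (fpol al i) = k.
Proof. by rewrite /fpol -big_enum size_prod_XsubC -cardE hsz prednK. Qed.

Definition pu (u : 'rV[F]_k) : {poly F} := \sum_i u 0 i *: fpol al i.

Lemma pu_size u : (size (pu u) <= k)%N.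
Proof.
apply: leq_trans (size_sum _ _ _) _; apply/bigmax_leqP_seq => i _ _.
by apply: leq_trans (size_scale_leq _ _) _; rewrite size_fpol.
Qed.

Definition Gmx : 'M[F]_(k, n) := \matrix_(i, j) (fpol al i).[al j].

Lemma mulG u j : (u *m Gmx) 0 j = (pu u).[al j].
Proof.
rewrite !mxE /pu horner_sum; apply: eq_bigr => i _; by rewrite hornerZ mxE.
Qed.

Lemma mulE u t : (u *m Emx al) 0 t = (pu u).[beta t].
Proof.
rewrite !mxE /pu horner_sum; apply: eq_bigr => i _; by rewrite hornerZ mxE.
Qed.

Lemma pu0 u : pu u = 0 -> u = 0.
Proof.
move=> H.
have uE : u *m Emx al = 0 by apply/rowP => t; rewrite mulE H horner0 mxE.
have unit : Emx al \in unitmx by rewrite unitmxE unitfE.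
by rewrite -(mulmxK unit u) uE mul0mx.
Qed.

Lemma roots_bound u : pu u != 0 -> (#|[set j | (pu u).[al j] == 0%R]| <= k.-1)%N.
Proof.
move=> nz.
have : (size (map al (enum [set j | (pu u).[al j] == 0%R])) < size (pu u))%N.
  apply: max_poly_roots => //.
    by apply/allP => x /mapP[j]; rewrite mem_enum inE /root => /eqP h ->; rewrite h.
  by rewrite map_inj_uniq // enum_uniq.
rewrite size_map -cardE => h; have := leq_trans h (pu_size u); lia.
Qed.

Lemma rowfreeG : forall v : 'rV[F]_k, v *m Gmx = 0 -> v = 0.
Proof.
move=> v vG; apply: pu0; apply/eqP; apply: contraT => nz.
have := roots_bound nz.
have -> : [set j | (pu v).[al j] == 0] = [set: 'I_n].
  by apply/setP => j; rewrite !inE -mulG vG mxE eqxx.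
rewrite cardsT card_ord; lia.
Qed.

Lemma wt_bound c : (c <= Gmx)%MS -> c != 0 -> (n - k + 1 <= hwt c)%N.
Proof.
move=> /submxP[u ->] nz.
have nzp : pu u != 0.
  apply: contraNneq nz => h; apply/eqP/matrixP => i j; rewrite ord1 mulG h horner0 mxE //.
have := roots_bound nzp.
rewrite /hwt.
have -> : [set j | (u *m Gmx) 0 j != 0] = ~: [set j | (pu u).[al j] == 0].
  by apply/setP => j; rewrite !inE mulG.
have := cardsC [set j | (pu u).[al j] == 0]; rewrite card_ord; lia.
Qed.

End Code.

End Alg.

Unset Implicit Arguments.

Theorem mainTheorem7 (n k : nat) (M : 'M[bool]_(k, n)) :
  (1 <= k)%N -> (k <= n)%N ->
  MDS_condition M ->
  (forall i : 'I_k, #|bsupp M i| = (n - k + 1)%N) ->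
  (forall i i' : 'I_k, i != i' -> (#|bzeros M i :&: bzeros M i'| <= 1)%N) ->
  forall F : finFieldType, (n + k - 1 <= #|F|)%N ->
    exists G : 'M[F]_(k, n), fits G M /\ is_MDS_generator G.
Proof.
move=> k1 kn MDS hsupp hpair F hF.
pose Z := fun i : 'I_k => bzeros M i.
have hZsz : forall i, #|Z i| = k.-1.
  move=> i; have := cardsC (bsupp M i); rewrite card_ord hsupp.
  have -> : ~: bsupp M i = Z i by apply/setP => j; rewrite !inE.
  lia.
have hcov : forall j, exists i, j \notin Z i.
  move=> j.
  have nz : [set: 'I_k] != set0 by apply/set0Pn; exists (Ordinal k1); rewrite inE.
  have := MDS _ nz; rewrite cardsT card_ord.
  case: (boolP (j \in \bigcup_(i in [set: 'I_k]) bsupp M i)) => [/bigcupP[i _ ji] _|nj].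
    by exists i; move: ji; rewrite !inE negbK.
  have sub : \bigcup_(i in [set: 'I_k]) bsupp M i \subset [set: 'I_n] :\ j.
    apply/subsetP => x xU; rewrite !inE andbT; apply/eqP => e; move: nj; by rewrite -e xU.
  have := subset_leq_card sub; have := cardsD1 j [set: 'I_n]; rewrite cardsT card_ord inE /=.
  lia.
have [s Hs] := select k1 hpair hcov.
move: Hs => /= [C1 C2].
pose Zn := fun t => Z (s (ordS k1 t)).
have ordSv : forall t : 'I_k, ordS k1 t = t by move=> t; apply: val_inj; rewrite ordSK.
have p00 : 'I_n := Ordinal (leq_trans k1 kn).
have hsz' : forall t, (t < k)%N -> #|Zn t| = k.-1 by move=> t _; apply: hZsz.
have hpair' : forall t u, (t < k)%N -> (u < k)%N -> t != u -> (#|Zn t :&: Zn u| <= 1)%N.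
  move=> t u tk uk tu; apply: hpair; rewrite (inj_eq perm_inj).
  by apply: contra tu => /eqP e; apply/eqP; apply: (ordS_inj tk uk e).
have [c [W1 W2]] := greedy p00 k1 hsz' hpair' C1 C2.
pose beta (t : 'I_k) : F := nth 0 (enum F) t.
have hFk : (k <= #|F|)%N by lia.
have betainj : injective beta.
  move=> x y /eqP; rewrite /beta nth_uniq ?enum_uniq // -?cardE.
  - by move/eqP/val_inj.
  - exact: leq_trans (ltn_ord x) hFk.
  - exact: leq_trans (ltn_ord y) hFk.
pose al0 : 'I_n -> F := fun p => beta (c p).
have d0 : \det (Emx Z beta al0) != 0.
  pose A := row_perm s (Emx Z beta al0).
  have dA : \det A != 0.
    have trig : is_trig_mx A^T.
      apply/is_trig_mxP => t u tu; rewrite !mxE fpolE.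
      have [p pu /eqP cp] := W2 u t tu (ltn_ord u).
      apply/eqP/prodf_eq0; exists p; first by move: pu; rewrite /Zn ordSv.
      rewrite /al0; have -> : c p = t by apply: val_inj.
      by rewrite subrr.
    rewrite -det_tr (det_trig trig).
    apply/prodf_neq0 => t _; rewrite !mxE fpolE; apply/prodf_neq0 => l lZ.
    rewrite subr_eq0; apply/negP => /eqP h; have e := betainj _ _ h.
    have lZn : l \in Zn t by rewrite /Zn ordSv.
    by move: (W1 l t (ltn_ord t) lZn); rewrite -e eqxx.
  by move: dA; rewrite /A row_permE det_mulmx; apply: contraNneq => ->; rewrite mulr0.
have hF' : (n + k - 1 <= #|F|)%N by [].
have [al [alinj dE]] := iter_distinct hcov d0 hF' k1.
exists (Gmx Z al).
have fitsG : fits (Gmx Z al) M.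
  move=> i j nM; rewrite mxE fpolE (bigD1 j) /=; first by rewrite subrr mul0r.
  by rewrite /Z inE.
split => //; split.
  by apply: inj_row_free => v; apply: (rowfreeG alinj dE hZsz k1 kn).
split; first by move=> c' cG nz; apply: (wt_bound alinj dE hZsz k1 kn).
pose i0 : 'I_k := Ordinal k1.
exists (row i0 (Gmx Z al)); first exact: row_sub.
apply/andP; split.
  apply/eqP; rewrite rowE => h.
  move: (rowfreeG alinj dE hZsz k1 kn h) => /matrixP/(_ 0 i0).
  by rewrite !mxE !eqxx /= => /eqP; rewrite oner_eq0.
rewrite eqn_leq; apply/andP; split; last first.
  apply: (wt_bound alinj dE hZsz k1 kn); first exact: row_sub.
  apply/eqP; rewrite rowE => h.
  move: (rowfreeG alinj dE hZsz k1 kn h) => /matrixP/(_ 0 i0).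
  by rewrite !mxE !eqxx /= => /eqP; rewrite oner_eq0.
rewrite -(hsupp i0) /hwt; apply: subset_leq_card; apply/subsetP => j.
rewrite !inE mxE; apply: contraR => nM.
by rewrite fitsG.
Qed.
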